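(* Let $\Lambda$ be a finite $k$-graph with no sources and let $J\sqcup K$ be a partition of $\{1,\dots,k\}$ with $J,K$ both nonempty. Let $\{\xi_{m,x}: m\in\mathbb{N}^J, x\in\Lambda^{m,\infty_K}\}$ be the orthonormal basis of point masses in $\ell^2(\partial^K\Lambda)=\bigoplus_{m\in\mathbb{N}^J}\ell^2(\Lambda^{m,\infty_K})$. For $\lambda\in\Lambda$ let $T_\lambda$ be the operator with $T_\lambda\xi_{m,x}=\xi_{m+d(\lambda)_J,\lambda x}$ if $s(\lambda)=r(x)$ and $T_\lambda\xi_{m,x}=0$ otherwise. Then $\{T_\lambda:\lambda\in\Lambda\}$ is a Toeplitz–Cuntz–Krieger $\Lambda$-family, and $\sum_{e\in v\Lambda^{e_i}}T_eT_e^*=T_v$ for all $v\in\Lambda^0$ and $i\in K$.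
   Context: A $k$-graph is a countable category $\Lambda$ with a degree functor $d:\Lambda\to\mathbb{N}^k$ satisfying the factorisation property (if $d(\lambda)=m+n$ there are unique $\mu,\nu$ with $d(\mu)=m$, $d(\nu)=n$, $\lambda=\mu\nu$); vertices $\Lambda^0=d^{-1}(0)$, range $r$ and source $s$, $\Lambda^n=d^{-1}(n)$, $v\Lambda^n=\{\lambda\in\Lambda^n:r(\lambda)=v\}$; finite means each $\Lambda^n$ finite; no sources means $v\Lambda^n\neq\emptyset$ for all $v,n$. $e_1,\dots,e_k$ are the generators of $\mathbb{N}^k$; $\vee$ is coordinatewise maximum. Paths: for $n\in(\mathbb{N}\cup\{\infty\})^k$, $\Lambda^n$ is the set of degree-preserving functors $x$ from $\Omega_{k,n}$ (morphisms $(p,q)$ with $p\le q\le n$, $d(p,q)=q-p$) to $\Lambda$, $d(x)=n$, $r(x)=x(0,0)$; for $\lambda\in\Lambda$ with $s(\lambda)=r(x)$, $\lambda x$ is the unique path of degree $d(\lambda)+d(x)$ with $(\lambda x)(0,d(\lambda))=\lambda$ and $(\lambda x)(d(\lambda)+p,d(\lambda)+q)=x(p,q)$. Writing $n=(n_J,n_K)$: for $m\in\mathbb{N}^J$, $\Lambda^{m,\infty_K}$ is the set of paths $x$ with $d(x)_J=m$ and $d(x)_i=\infty$ for $i\in K$, and $\partial^K\Lambda=\bigcup_{m\in\mathbb{N}^J}\Lambda^{m,\infty_K}$. For $\mu,\nu\in\Lambda$, $\Lambda^{\min}(\mu,\nu)=\{(\eta,\zeta)\in\Lambda\times\Lambda:\mu\eta=\nu\zeta,\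 d(\mu\eta)=d(\mu)\vee d(\nu)\}$. A Toeplitz–Cuntz–Krieger $\Lambda$-family is a set of partial isometries $\{T_\lambda\}$ with (T1) $\{T_v:v\in\Lambda^0\}$ mutually orthogonal projections; (T2) $T_\lambda T_\mu=T_{\lambda\mu}$ when $s(\lambda)=r(\mu)$; (T3) $T_\lambda^*T_\lambda=T_{s(\lambda)}$; (T4) $T_v\ge\sum_{\lambda\in v\Lambda^n}T_\lambda T_\lambda^*$ for all $v,n$; (T5) $T_\mu^*T_\nu=\sum_{(\eta,\zeta)\in\Lambda^{\min}(\mu,\nu)}T_\eta T_\zeta^*$ (empty sum $=0$). *)

(* Defs.v *)
From Stdlib Require Import Reals ClassicalEpsilon.
From mathcomp Require Import all_boot.
From Stdlib Require List.

Set Implicit Arguments.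
Unset Strict Implicit.
Unset Printing Implicit Defensive.

Definition deg (k : nat) := {ffun 'I_k -> nat}.
Definition dzero (k : nat) : deg k := [ffun _ => 0%N].
Definition addd k (m n : deg k) : deg k := [ffun i => (m i + n i)%N].
Definition joind k (m n : deg k) : deg k := [ffun i => maxn (m i) (n i)].
Definition unit_deg k (i : 'I_k) : deg k := [ffun j => if j == i then 1%N else 0%N].
Definition leqd k (p q : deg k) : bool := [forall i, (p i <= q i)%N].

(* kr = range r (codomain), ks = source s (domain), kcomp mu nu = mu nu *)
(* (defined when ks mu = kr nu).                                       *)
Record kgraph (k : nat) := KGraph {
  kObj : Type;
  kMor : Type;
  kr : kMor -> kObj;
  ks : kMor -> kObj;
  kid : kObj -> kMor;
  kcomp : kMor -> kMor -> kMor;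
  kd : kMor -> deg k;
  kr_id : forall v, kr (kid v) = v;
  ks_id : forall v, ks (kid v) = v;
  kr_comp : forall mu nu, ks mu = kr nu -> kr (kcomp mu nu) = kr mu;
  ks_comp : forall mu nu, ks mu = kr nu -> ks (kcomp mu nu) = ks nu;
  kcomp_idl : forall l, kcomp (kid (kr l)) l = l;
  kcomp_idr : forall l, kcomp l (kid (ks l)) = l;
  kcomp_assoc : forall a b c, ks a = kr b -> ks b = kr c ->
      kcomp (kcomp a b) c = kcomp a (kcomp b c);
  kd_id : forall v, kd (kid v) = dzero k;
  kd_comp : forall mu nu, ks mu = kr nu -> kd (kcomp mu nu) = addd (kd mu) (kd nu);
  kfactor : forall l (m n : deg k), kd l = addd m n ->
      exists mu nu, [/\ ks mu = kr nu, kd mu = m, kd nu = n & l = kcomp mu nu];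
  kfactor_uniq : forall mu nu mu' nu', ks mu = kr nu -> ks mu' = kr nu' ->
      kd mu = kd mu' -> kd nu = kd nu' -> kcomp mu nu = kcomp mu' nu' ->
      mu = mu' /\ nu = nu';
  kcountable : exists f : kMor -> nat, injective f
}.

Definition kfinite k (G : kgraph k) : Prop :=
  forall n : deg k, exists l : seq (kMor G), forall lam, kd lam = n -> List.In lam l.

Definition no_sources k (G : kgraph k) : Prop :=
  forall (v : kObj G) (n : deg k), exists lam, kr lam = v /\ kd lam = n.

Definition Lmin k (G : kgraph k) (mu nu eta zeta : kMor G) : Prop :=
  [/\ ks mu = kr eta, ks nu = kr zeta, kcomp mu eta = kcomp nu zeta
    & kd (kcomp mu eta) = joind (kd mu) (kd nu)].

(* Boundary paths.  K : pred 'I_k is the set K, J is its complement.   *)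
(* For m in N^J (represented by m : deg k, only J-coordinates used),   *)
(* the degree n = (m, ∞_K); Ω_{k,n} has objects p with p_J <= m and    *)
(* morphisms (p,q), p <= q <= n.                                        *)
Definition inOm k (K : pred 'I_k) (m p : deg k) : bool :=
  [forall i, ~~ K i ==> (p i <= m i)%N].

Lemma inOm0 k (K : pred 'I_k) (m : deg k) : inOm K m (dzero k).
Proof. by apply/forallP => i; apply/implyP => _; rewrite ffunE. Qed.

Record kpath k (G : kgraph k) (K : pred 'I_k) (m : deg k) := KPath {
  xo : forall p : deg k, inOm K m p -> kObj G;
  xm : forall p q : deg k, inOm K m p -> inOm K m q -> leqd p q -> kMor G;
  xm_r : forall p q hp hq hpq, kr (@xm p q hp hq hpq) = @xo p hp;
  xm_s : forall p q hp hq hpq, ks (@xm p q hp hq hpq) = @xo q hq;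
  xm_id : forall p hp hpp, @xm p p hp hp hpp = kid (@xo p hp);
  xm_comp : forall p q t hp hq ht hpq hqt hpt,
      @xm p t hp ht hpt = kcomp (@xm p q hp hq hpq) (@xm q t hq ht hqt);
  xm_deg : forall p q hp hq hpq, kd (@xm p q hp hq hpq) = [ffun i => (q i - p i)%N]
}.

Definition rpath k (G : kgraph k) (K : pred 'I_k) (m : deg k) (x : kpath G K m) : kObj G :=
  xo x (inOm0 K m).

Definition IsConcat k (G : kgraph k) (K : pred 'I_k) (lam : kMor G) (m m' : deg k)
  (x : kpath G K m) (y : kpath G K m') : Prop :=
  (forall (h0 : inOm K m' (dzero k)) (h1 : inOm K m' (kd lam)) (h01 : leqd (dzero k) (kd lam)),
      xm y h0 h1 h01 = lam) /\
  (forall (p q : deg k) (hp : inOm K m p) (hq : inOm K m q) (hpq : leqd p q)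
      (hp' : inOm K m' (addd (kd lam) p)) (hq' : inOm K m' (addd (kd lam) q))
      (hpq' : leqd (addd (kd lam) p) (addd (kd lam) q)),
      xm y hp' hq' hpq' = xm x hp hq hpq).

(* index set of the point-mass basis of l^2(∂^K Λ): pairs (m, x) with
   m in N^J (normalised: K-coordinates are 0) and x in Λ^{m,∞_K} *)
Record bidx k (G : kgraph k) (K : pred 'I_k) := BIdx {
  bm : deg k;
  bm_norm : [forall i, K i ==> (bm i == 0%N)];
  bx : kpath G K bm
}.

Definition dJ k (G : kgraph k) (K : pred 'I_k) (lam : kMor G) : deg k :=
  [ffun i => if K i then 0%N else kd lam i].

(* Operators on l^2(X), represented by their matrix coefficients      *)
(* A y x = < A ξ_x , ξ_y > with respect to the orthonormal basis of    *)
(* point masses.  (Real scalars.)                        *)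
Local Open Scope R_scope.
Definition rsum T (f : T -> R) (l : seq T) : R := foldr (fun x acc => (f x + acc)) 0 l.

Definition HasSum X (f : X -> R) (s : R) : Prop :=
  forall eps, (0 < eps) -> exists F0 : seq X, forall F : seq X,
    List.NoDup F -> List.incl F0 F -> (Rabs (rsum f F - s) < eps).

Definition tsum X (f : X -> R) : R := epsilon (inhabits 0) (HasSum f).

Definition op (X : Type) := X -> X -> R.
Definition adj X (A : op X) : op X := fun y x => A x y.
Definition mmul X (A B : op X) : op X := fun y x => tsum (fun z => (A y z * B z x)).
Definition mzero X : op X := fun _ _ => 0.
Definition madd X (A B : op X) : op X := fun y x => (A y x + B y x).
Definition msub X (A B : op X) : op X := fun y x => (A y x - B y x).
Definition msum I X (F : I -> op X) (l : seq I) : op X :=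
  fun y x => rsum (fun i => F i y x) l.
Definition meq X (A B : op X) : Prop := forall y x, A y x = B y x.

Definition bounded X (A : op X) : Prop :=
  exists C : R, forall (F G : seq X) (c : X -> R), List.NoDup F -> List.NoDup G ->
    (rsum (fun y => let u := rsum (fun x => A y x * c x) F in u * u) G
      <= C * rsum (fun x => c x * c x) F).

Definition positive X (A : op X) : Prop :=
  meq (adj A) A /\
  forall (F : seq X) (c : X -> R), List.NoDup F ->
    (0 <= rsum (fun y => rsum (fun x => c y * A y x * c x) F) F).

Definition is_projection X (A : op X) : Prop := meq (adj A) A /\ meq (mmul A A) A.
Definition is_partial_isometry X (A : op X) : Prop :=
  bounded A /\ meq (mmul A (mmul (adj A) A)) A.

Definition TCK_family k (G : kgraph k) X (T : kMor G -> op X) : Prop :=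
  [/\ (forall lam, is_partial_isometry (T lam)),
      ((forall v, is_projection (T (kid v))) /\
       (forall v w, v <> w -> meq (mmul (T (kid v)) (T (kid w))) (@mzero X))),
      (forall lam mu, ks lam = kr mu -> meq (mmul (T lam) (T mu)) (T (kcomp lam mu))),
      (forall lam, meq (mmul (adj (T lam)) (T lam)) (T (kid (ks lam))))
    &
      ((forall (v : kObj G) (n : deg k) (l : seq (kMor G)), List.NoDup l ->
         (forall lam, List.In lam l <-> (kr lam = v /\ kd lam = n)) ->
         positive (msub (T (kid v)) (msum (fun lam => mmul (T lam) (adj (T lam))) l)))
    /\
      (forall (mu nu : kMor G) (l : seq (kMor G * kMor G)), List.NoDup l ->
         (forall pr, List.In pr l <-> Lmin mu nu pr.1 pr.2) ->
         meq (mmul (adj (T mu)) (T nu))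
             (msum (fun pr => mmul (T pr.1) (adj (T pr.2))) l)))].

Definition Tpoint k (G : kgraph k) (K : pred 'I_k) (lam : kMor G) : op (bidx G K) :=
  fun y x =>
    if excluded_middle_informative
         [/\ ks lam = rpath (bx x), bm y = addd (bm x) (dJ K lam)
           & IsConcat lam (bx x) (bx y)]
    then 1 else 0.
Arguments Tpoint {k G} K lam _ _.

(* Main.v *)
Require Import Defs.
From Stdlib Require Import Reals.
From mathcomp Require Import all_boot.
From Stdlib Require List.
From Stdlib Require Import ClassicalEpsilon FunctionalExtensionality ProofIrrelevance Lra.
From mathcomp Require Import zify.

Set Implicit Arguments.
Unset Strict Implicit.
Unset Printing Implicit Defensive.

Definition subd k (m n : deg k) : deg k := [ffun i => (m i - n i)%N].

Lemma degP k (p q : deg k) : p = q <-> forall i, p i = q i.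
Proof. split=> [-> //|H]; exact/ffunP. Qed.
Lemma leqdP k (p q : deg k) : leqd p q <-> forall i, (p i <= q i)%N.
Proof. split=> [/forallP H i|H]; [exact: H| exact/forallP]. Qed.
Lemma inOmP k (K : pred 'I_k) m p : inOm K m p <-> forall i, ~~ K i -> (p i <= m i)%N.
Proof. split=> [/forallP H i|H]; [exact/implyP/H | apply/forallP=> i; exact/implyP/H]. Qed.

Ltac dprep := repeat match goal with
 | H : is_true (leqd _ _) |- _ => move/leqdP: H => H
 | H : is_true (inOm _ _ _) |- _ => move/inOmP: H => H
 | H : @eq (deg _) _ _ |- _ => move/degP: H => H
 end.
Ltac dgoal := match goal with
 | |- is_true (leqd _ _) => apply/leqdP
 | |- is_true (inOm _ _ _) => apply/inOmP
 | |- @eq (deg _) _ _ => apply/degP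
 | _ => idtac end.
Ltac dspec i := repeat match goal with
 | H : forall j, _ |- _ => move: (H i) => ?; clear H end.
Ltac dsolve := dprep; dgoal; let i := fresh "i" in move=> i; dspec i;
  unfold addd, subd, joind, dJ, dzero in *;
  repeat match goal with H : context [ fun_of_fin (finfun _) _ ] |- _ => rewrite ffunE in H end; rewrite ?ffunE;
  try match goal with K : pred _ |- _ => destruct (K i) end; lia.

Lemma test k (K : pred 'I_k) (m p a: deg k) : inOm K m p -> leqd a p -> inOm K m a /\ subd (addd a p) a = p.
Proof. move=> h1 h2; split; dsolve. Qed.

Section KG.
Variables (k : nat) (G : kgraph k).
Notation Mor := (kMor G).

Lemma deg0_id (a : Mor) : kd a = dzero k -> a = kid (kr a).
Proof.
move=> h.
have e : kcomp (kid (kr a)) a = kcomp a (kid (ks a)) by rewrite kcomp_idl kcomp_idr.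
have [e1 _] := kfactor_uniq (ks_id (kr a)) (esym (kr_id (ks a)))
  (etrans (kd_id _) (esym h)) (etrans h (esym (kd_id _))) e.
exact: esym e1.
Qed.

Definition T3P (w : Mor) (p q : deg k) (t : Mor * Mor * Mor) : Prop :=
  [/\ ks t.1.1 = kr t.1.2, ks t.1.2 = kr t.2, w = kcomp (kcomp t.1.1 t.1.2) t.2,
      kd t.1.1 = p & kd t.1.2 = subd q p] /\ kd t.2 = subd (kd w) q.

Lemma uniq3 w p q t t' : T3P w p q t -> T3P w p q t' -> t = t'.
Proof.
case: t => [[a b] c]; case: t' => [[a' b'] c'] /=.
move=> [[h1 h2 h3 h4 h5] h6] [[h1' h2' h3' h4' h5'] h6']; simpl in *.
have hab : ks (kcomp a b) = kr c by rewrite ks_comp.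
have hab' : ks (kcomp a' b') = kr c' by rewrite ks_comp.
have dk : kd (kcomp a b) = kd (kcomp a' b') by rewrite !kd_comp // h4 h5 h4' h5'.
have [e ec] := kfactor_uniq hab hab' dk (etrans h6 (esym h6')) (etrans (esym h3) h3').
have [ea eb] := kfactor_uniq h1 h1' (etrans h4 (esym h4')) (etrans h5 (esym h5')) e.
by subst.
Qed.

Lemma decomp3 w p q : leqd p q -> leqd q (kd w) -> exists t, T3P w p q t.
Proof.
move=> hpq hqw.
have [u [c [e1 e2 e3 e4]]] := @kfactor _ G w q (subd (kd w) q) ltac:(dsolve).
have [a [b [f1 f2 f3 f4]]] := @kfactor _ G u p (subd q p) ltac:(rewrite e2; dsolve).
exists (a, b, c); split; [split|] => //=.
- by rewrite -e1 f4 ks_comp.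
- by rewrite -f4.
Qed.

Definition seg (w : Mor) (p q : deg k) : Mor :=
  (epsilon (inhabits (w, w, w)) (T3P w p q)).1.2.

Lemma seg_T3P w p q t : T3P w p q t -> seg w p q = t.1.2.
Proof.
move=> h; rewrite /seg.
have e := epsilon_spec (inhabits (w, w, w)) (T3P w p q) (ex_intro _ t h).
by rewrite (uniq3 e h).
Qed.

Lemma seg_eq a b c p q : ks a = kr b -> ks b = kr c -> kd a = p -> kd b = subd q p ->
  leqd p q -> seg (kcomp (kcomp a b) c) p q = b.
Proof.
move=> h1 h2 h3 h4 h5; apply: (seg_T3P (t := (a, b, c))); split; [split|] => //=.
rewrite kd_comp ?ks_comp // kd_comp // h3 h4. dsolve.
Qed.

End KG.

Section KP.
Variables (k : nat) (G : kgraph k) (K : pred 'I_k).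
Notation Mor := (kMor G).

Lemma xm_irr m (x : kpath G K m) p q p' q' hp hq hpq hp' hq' hpq' :
  p = p' -> q = q' -> @xm _ _ _ _ x p q hp hq hpq = @xm _ _ _ _ x p' q' hp' hq' hpq'.
Proof.
move=> ep eq; subst p' q'.
by rewrite (bool_irrelevance hp hp') (bool_irrelevance hq hq') (bool_irrelevance hpq hpq').
Qed.

Lemma xo_irr m (x : kpath G K m) p p' hp hp' : p = p' -> @xo _ _ _ _ x p hp = @xo _ _ _ _ x p' hp'.
Proof. move=> e; subst p'; by rewrite (bool_irrelevance hp hp'). Qed.

Lemma kpath_eq m (x y : kpath G K m) :
  (forall p q hp hq hpq, @xm _ _ _ _ x p q hp hq hpq = @xm _ _ _ _ y p q hp hq hpq) -> x = y.
Proof.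
case: x => xo1 xm1 r1 s1 i1 c1 d1; case: y => xo2 xm2 r2 s2 i2 c2 d2 /= H.
have eo : xo1 = xo2.
  apply: functional_extensionality_dep => p; apply: functional_extensionality_dep => hp.
  have hpp : leqd p p by apply/leqdP.
  by rewrite -(r1 p p hp hp hpp) -(r2 p p hp hp hpp) H.
subst xo2.
have em : xm1 = xm2.
  do 5 (apply: functional_extensionality_dep => ?). exact: H.
subst xm2. f_equal; apply: proof_irrelevance.
Qed.

Definition inOmd m p := inOm K m p.

Section Builder.
Variables (m : deg k) (Y : deg k -> deg k -> Mor).
Hypothesis H1 : forall p q, inOm K m p -> inOm K m q -> leqd p q ->
  kd (Y p q) = [ffun i => (q i - p i)%N].
Hypothesis H2 : forall p q t, inOm K m p -> inOm K m q -> inOm K m t -> leqd p q -> leqd q t ->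
  ks (Y p q) = kr (Y q t) /\ Y p t = kcomp (Y p q) (Y q t).

Lemma leqdd (p : deg k) : leqd p p. Proof. by apply/leqdP. Qed.

Definition mkpath : kpath G K m.
refine (@KPath _ G K m (fun p hp => kr (Y p p)) (fun p q hp hq hpq => Y p q) _ _ _ _ _).
- move=> p q hp hq hpq /=.
  have [h e] := H2 hp hp hq (leqdd p) hpq.
  by rewrite {1}e kr_comp.
- move=> p q hp hq hpq /=. by have [h e] := H2 hp hq hq hpq (leqdd q).
- move=> p hp hpp /=. apply: deg0_id. rewrite H1 //. dsolve.
- move=> p q t hp hq ht hpq hqt hpt /=. by have [h e] := H2 hp hq ht hpq hqt.
- move=> p q hp hq hpq /=. exact: H1.
Defined.

Lemma xm_mk p q hp hq hpq : @xm _ _ _ _ mkpath p q hp hq hpq = Y p q.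
Proof. by []. Qed.
End Builder.

Lemma xm_rid m (x : kpath G K m) p hp hpp : kr (@xm _ _ _ _ x p p hp hp hpp) = xo x hp.
Proof. by rewrite xm_r. Qed.

Lemma seg_path m (y : kpath G K m) p q t hp hq ht hpq (hqt : leqd q t) (h0 : inOm K m (dzero k)) h0t :
  seg (@xm _ _ _ _ y (dzero k) t h0 ht h0t) p q = @xm _ _ _ _ y p q hp hq hpq.
Proof.
have h0p : leqd (dzero k) p by dsolve.
have h0q : leqd (dzero k) q by dsolve.
rewrite (xm_comp y h0 hq ht h0q hqt) (xm_comp y h0 hp hq h0p hpq).
apply: seg_eq; rewrite ?xm_r ?xm_s ?xm_deg //; dsolve.
Qed.

End KP.

Section Concat.
Variables (k : nat) (G : kgraph k) (K : pred 'I_k).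
Notation Mor := (kMor G).

Definition xmt m (x : kpath G K m) (p q : deg k) : Mor :=
  match excluded_middle_informative (inOm K m p /\ inOm K m q /\ leqd p q) with
  | left H => @xm _ _ _ _ x p q (proj1 H) (proj1 (proj2 H)) (proj2 (proj2 H))
  | right _ => kid (xo x (inOm0 K m)) end.

Lemma xmt_eq m (x : kpath G K m) p q hp hq hpq : xmt x p q = @xm _ _ _ _ x p q hp hq hpq.
Proof.
rewrite /xmt; case: excluded_middle_informative => [H|[]]; last by [].
exact: xm_irr.
Qed.

Variables (m : deg k) (lam : Mor) (x : kpath G K m).
Hypothesis hl : ks lam = rpath x.
Let n := kd lam.
Definition cm := addd m (dJ K lam).
Definition tq (q : deg k) := subd (joind q n) n.
Definition Wc (q : deg k) := kcomp lam (xmt x (dzero k) (tq q)).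
Definition Yc (p q : deg k) := seg (Wc q) p q.

Lemma tq_in q : inOm K cm q -> inOm K m (tq q).
Proof. rewrite /cm /tq /n => h. dsolve. Qed.

Lemma Wc_eq q (hq : inOm K cm q) h0 h0q :
  Wc q = kcomp lam (@xm _ _ _ _ x (dzero k) (tq q) h0 (tq_in hq) h0q).
Proof. rewrite /Wc; congr kcomp; exact: xmt_eq. Qed.

Lemma ks_lam0 q h0 hq h0q : ks lam = kr (@xm _ _ _ _ x (dzero k) q h0 hq h0q).
Proof. by rewrite xm_r hl /rpath (bool_irrelevance h0 (inOm0 K m)). Qed.

Lemma kd_Wc q (hq : inOm K cm q) : kd (Wc q) = joind q n.
Proof.
have h0q : leqd (dzero k) (tq q) by dsolve.
rewrite (Wc_eq hq (inOm0 K m) h0q) kd_comp ?xm_deg; last exact: ks_lam0.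
rewrite /tq /n; dsolve.
Qed.

Lemma Yc_deg p q : inOm K cm p -> inOm K cm q -> leqd p q ->
  kd (Yc p q) = [ffun i => (q i - p i)%N].
Proof.
move=> hp hq hpq.
have [t ht] := decomp3 (w := Wc q) hpq ltac:(rewrite kd_Wc //; dsolve).
rewrite /Yc (seg_T3P ht). case: ht => [[_ _ _ _ ->] _] //.
Qed.

Lemma Wc_ext q t (hq : inOm K cm q) (ht : inOm K cm t) : leqd q t ->
  exists rho, ks (Wc q) = kr rho /\ Wc t = kcomp (Wc q) rho.
Proof.
move=> hqt.
have h0 := inOm0 K m.
have hqq : leqd (tq q) (tq t) by rewrite /tq; dsolve.
exists (@xm _ _ _ _ x (tq q) (tq t) (tq_in hq) (tq_in ht) hqq).
have h0q : leqd (dzero k) (tq q) by dsolve.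
have e1 := ks_lam0 h0 (tq_in hq) h0q.
have h0t : leqd (dzero k) (tq t) by dsolve.
rewrite (Wc_eq hq h0 h0q) (Wc_eq ht h0 h0t); split.
- by rewrite ks_comp // xm_s xm_r.
- rewrite kcomp_assoc //; last by rewrite xm_s xm_r.
  congr kcomp; rewrite -xm_comp; exact: xm_irr.
Qed.

Lemma Yc_comp p q t : inOm K cm p -> inOm K cm q -> inOm K cm t -> leqd p q -> leqd q t ->
  ks (Yc p q) = kr (Yc q t) /\ Yc p t = kcomp (Yc p q) (Yc q t).
Proof.
move=> hp hq ht hpq hqt.
have [rho [hr ewt]] := Wc_ext hq ht hqt.
have [[[a b] c] h3] := decomp3 (w := Wc q) hpq ltac:(rewrite kd_Wc //; dsolve).
have ypq : Yc p q = b by rewrite /Yc (seg_T3P h3).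
case: h3 => [[/= h1 h2 h4 h5 h6] h7].
have hcr : ks c = kr rho by rewrite -hr h4 ks_comp // ks_comp.
have hdq : kd (kcomp a b) = q by rewrite kd_comp // h5 h6; dsolve.
have dr : kd (Wc t) = addd (kd (Wc q)) (kd rho) by rewrite ewt kd_comp.
have hfa : kd (kcomp c rho) = addd (subd t q) (subd (kd (kcomp c rho)) (subd t q)).
  rewrite !kd_Wc // in dr; rewrite kd_Wc // in h7.
  rewrite kd_comp // h7; clear -dr hqt; dsolve.
have [d [e [f1 f2 f3 f4]]] := @kfactor _ G (kcomp c rho) (subd t q)
   (subd (kd (kcomp c rho)) (subd t q)) hfa.
have hab : ks (kcomp a b) = kr c by rewrite ks_comp.
have hdc : kr d = kr c by rewrite -(kr_comp f1) -f4 (kr_comp hcr).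
have had : ks (kcomp a b) = kr d by rewrite hab hdc.
have ewt2 : Wc t = kcomp (kcomp (kcomp a b) d) e.
  by rewrite ewt h4 (kcomp_assoc hab hcr) f4 -(kcomp_assoc had f1).
have hbd : ks b = kr d by rewrite h2 hdc.
have yqt : Yc q t = d.
  by rewrite /Yc ewt2; apply: seg_eq.
have ypt : Yc p t = kcomp b d.
  rewrite /Yc ewt2 (kcomp_assoc h1 hbd); apply: seg_eq => //.
  - by rewrite kr_comp.
  - by rewrite ks_comp.
  - rewrite kd_comp // h6 f2; dsolve.
  - dsolve.
by rewrite ypq yqt ypt.
Qed.

Definition cpath : kpath G K cm := mkpath Yc_deg Yc_comp.

End Concat.

Section ConcatProps.
Variables (k : nat) (G : kgraph k) (K : pred 'I_k).
Notation Mor := (kMor G).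
Variables (m : deg k) (lam : Mor) (x : kpath G K m).
Hypothesis hl : ks lam = rpath x.

Lemma cpath_concat : IsConcat lam x (cpath hl).
Proof.
split.
- move=> h0 h1 h01; rewrite xm_mk /Yc.
  have h0m := inOm0 K m.
  have e : Wc lam x (kd lam) = kcomp (kcomp (kid (kr lam)) lam) (xmt x (dzero k) (tq lam (kd lam))).
    by rewrite kcomp_idl.
  have h0t : leqd (dzero k) (tq lam (kd lam)) by rewrite /tq; dsolve.
  rewrite e (xmt_eq x h0m (tq_in h1) h0t); apply: seg_eq => //.
  + by rewrite ks_id.
  + exact: ks_lam0.
  + exact: kd_id.
  + dsolve.
- move=> p q hp hq hpq hp' hq' hpq'; rewrite xm_mk /Yc /Wc.
  have h0m := inOm0 K m.
  have -> : tq lam (addd (kd lam) q) = q by rewrite /tq; dsolve.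
  have h0p : leqd (dzero k) p by dsolve.
  have h0q : leqd (dzero k) q by dsolve.
  rewrite (xmt_eq x h0m hq h0q) (xm_comp x h0m hp hq h0p hpq).
  have hA := ks_lam0 hl h0m hp h0p.
  have hAB : ks (xm x h0m hp h0p) = kr (xm x hp hq hpq) by rewrite xm_s xm_r.
  rewrite -(kcomp_assoc hA hAB) -[X in seg X]kcomp_idr.
  apply: seg_eq.
  + by rewrite ks_comp.
  + by rewrite kr_id ks_comp // ks_comp.
  + rewrite kd_comp // xm_deg; dsolve.
  + rewrite xm_deg; dsolve.
  + dsolve.
Qed.

Lemma concat_uniq (y : kpath G K (cm K m lam)) : IsConcat lam x y ->
  forall p q hp hq hpq, @xm _ _ _ _ y p q hp hq hpq = Yc lam x p q.
Proof.
move=> [c1 c2] p q hp hq hpq.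
have h0 := inOm0 K (cm K m lam).
have hn : inOm K (cm K m lam) (kd lam) by rewrite /cm; dsolve.
have hj : inOm K (cm K m lam) (joind q (kd lam)) by rewrite /cm in hq hn *; dsolve.
have hqj : leqd q (joind q (kd lam)) by dsolve.
have h0j : leqd (dzero k) (joind q (kd lam)) by dsolve.
have h0n : leqd (dzero k) (kd lam) by dsolve.
have hnj : leqd (kd lam) (joind q (kd lam)) by dsolve.
rewrite -(seg_path y hp hq hj hpq hqj h0 h0j) (xm_comp y h0 hn hj h0n hnj) c1.
have h0m := inOm0 K m.
have htq := tq_in hq.
have h0t : leqd (dzero k) (tq lam q) by dsolve.
have hn0 : inOm K (cm K m lam) (addd (kd lam) (dzero k)) by rewrite /cm in hn *; dsolve.
have hnt : inOm K (cm K m lam) (addd (kd lam) (tq lam q)) by rewrite /cm /tq in hj *; dsolve.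
have hnt' : leqd (addd (kd lam) (dzero k)) (addd (kd lam) (tq lam q)) by rewrite /tq; dsolve.
have := c2 _ _ h0m htq h0t hn0 hnt hnt'.
rewrite (xm_irr y _ _ _ hn hj hnj); [| dsolve | rewrite /tq; dsolve] => ->.
by rewrite /Yc /Wc (xmt_eq x h0m htq h0t).
Qed.

End ConcatProps.

Section Shift.
Variables (k : nat) (G : kgraph k) (K : pred 'I_k).
Notation Mor := (kMor G).
Variables (m : deg k) (lam : Mor) (y : kpath G K m).
Hypothesis hn : inOm K m (kd lam).
Definition sm := subd m (dJ K lam).
Definition Ys (p q : deg k) := xmt y (addd (kd lam) p) (addd (kd lam) q).

Lemma leqd_trans (p q t : deg k) : leqd p q -> leqd q t -> leqd p t.
Proof. move=> h1 h2; dsolve. Qed.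

Lemma sh_in p : inOm K sm p -> inOm K m (addd (kd lam) p).
Proof. rewrite /sm => h. have hn0 := hn. dsolve. Qed.
Lemma sh_le p q : leqd p q -> leqd (addd (kd lam) p) (addd (kd lam) q).
Proof. move=> h; dsolve. Qed.

Lemma Ys_eq p q (hp : inOm K sm p) (hq : inOm K sm q) (hpq : leqd p q) : Ys p q = @xm _ _ _ _ y _ _ (sh_in hp) (sh_in hq) (sh_le hpq).
Proof. exact: xmt_eq. Qed.

Lemma Ys_deg p q : inOm K sm p -> inOm K sm q -> leqd p q ->
  kd (Ys p q) = [ffun i => (q i - p i)%N].
Proof. move=> hp hq hpq; rewrite (Ys_eq hp hq hpq) xm_deg; dsolve. Qed.

Lemma Ys_comp p q t : inOm K sm p -> inOm K sm q -> inOm K sm t -> leqd p q -> leqd q t ->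
  ks (Ys p q) = kr (Ys q t) /\ Ys p t = kcomp (Ys p q) (Ys q t).
Proof.
move=> hp hq ht hpq hqt.
rewrite (Ys_eq hp hq hpq) (Ys_eq hq ht hqt) (Ys_eq hp ht (leqd_trans hpq hqt)).
split; [by rewrite xm_s xm_r | rewrite -xm_comp; [exact: sh_le (leqd_trans hpq hqt) | move=> ?; exact: xm_irr]].
Qed.

Definition spath : kpath G K sm := mkpath Ys_deg Ys_comp.

Lemma spath_concat : (forall h0 h1 h01, @xm _ _ _ _ y (dzero k) (kd lam) h0 h1 h01 = lam) ->
  ks lam = rpath spath /\ IsConcat lam spath y.
Proof.
move=> H; have h0 := inOm0 K m; have h01 : leqd (dzero k) (kd lam) by dsolve.
have hn0 := hn.
split.
- have hs0 : inOm K sm (dzero k) := inOm0 K sm.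
  rewrite -(H h0 hn h01) xm_s /rpath /= (Ys_eq hs0 hs0 (leqdd _)) xm_r.
  apply: xo_irr; dsolve.
- split.
  + move=> h0' h1' h01'; exact: H.
  + move=> p q hp hq hpq hp' hq' hpq'; rewrite xm_mk /Ys xmt_eq //.
Qed.
End Shift.

Section Bidx.
Variables (k : nat) (G : kgraph k) (K : pred 'I_k).
Notation Mor := (kMor G).
Notation X := (bidx G K).

Definition Cat (lam : Mor) (x y : X) : Prop :=
  [/\ ks lam = rpath (bx x), bm y = addd (bm x) (dJ K lam) & IsConcat lam (bx x) (bx y)].

Lemma normP (x : X) i : K i -> bm x i = 0%N.
Proof. move=> hi; have /forallP/(_ i) := bm_norm x; rewrite hi /= => /eqP. done. Qed.

Lemma bidx_eq m h1 h2 (p1 p2 : kpath G K m) : p1 = p2 -> @BIdx _ _ _ m h1 p1 = @BIdx _ _ _ m h2 p2.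
Proof. move=> ->; by rewrite (bool_irrelevance h1 h2). Qed.

Lemma CatF lam x y1 y2 : Cat lam x y1 -> Cat lam x y2 -> y1 = y2.
Proof.
case: x => m h px; case: y1 => m1 h1 p1; case: y2 => m2 h2 p2 /=.
move=> [hl e1 c1] [_ e2 c2]; simpl in *; subst m1 m2.
apply: bidx_eq; apply: kpath_eq => p q hp hq hpq.
by rewrite (concat_uniq c1) (concat_uniq c2).
Qed.

Lemma CatI lam x1 x2 y : Cat lam x1 y -> Cat lam x2 y -> x1 = x2.
Proof.
case: x1 => m1 h1 p1; case: x2 => m2 h2 p2; case: y => my hy py /=.
move=> [hl1 e1 [_ c1]] [hl2 e2 [_ c2]]; simpl in *.
have em : m1 = m2.
  apply/degP => i; have := e1; rewrite e2 => /degP/(_ i); rewrite !ffunE; lia.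
subst m2 my; apply: bidx_eq; apply: kpath_eq => p q hp hq hpq.
have hp' : inOm K (addd m1 (dJ K lam)) (addd (kd lam) p) by dsolve.
have hq' : inOm K (addd m1 (dJ K lam)) (addd (kd lam) q) by dsolve.
have hpq' : leqd (addd (kd lam) p) (addd (kd lam) q) by dsolve.
by rewrite -(c1 p q hp hq hpq hp' hq' hpq') -(c2 p q hp hq hpq hp' hq' hpq').
Qed.

Lemma CatE lam x : ks lam = rpath (bx x) -> exists y, Cat lam x y.
Proof.
move=> hl.
have hn : [forall i, K i ==> (cm K (bm x) lam i == 0%N)].
  apply/forallP => i; apply/implyP => hi; rewrite /cm /addd /dJ !ffunE hi normP //.
by exists (BIdx hn (cpath hl)); split => //=; exact: cpath_concat.
Qed.

Lemma CatIm lam x y : Cat lam x y -> inOm K (bm y) (kd lam) /\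
  (forall h0 h1 h01, @xm _ _ _ _ (bx y) (dzero k) (kd lam) h0 h1 h01 = lam).
Proof. move=> [hl e [c1 c2]]; split => //. rewrite e; dsolve. Qed.

Lemma CatPre lam y : inOm K (bm y) (kd lam) ->
  (forall h0 h1 h01, @xm _ _ _ _ (bx y) (dzero k) (kd lam) h0 h1 h01 = lam) ->
  exists x, Cat lam x y.
Proof.
move=> hn H.
have hs : [forall i, K i ==> (sm K (bm y) lam i == 0%N)].
  apply/forallP => i; apply/implyP => hi; rewrite /sm /subd /dJ !ffunE hi normP //.
have [e1 e2] := spath_concat hn H.
exists (BIdx hs (spath (bx y) hn)); split => //=.
apply/degP => i; rewrite /sm /subd /addd /dJ !ffunE.
case hi: (K i); first by rewrite normP.
move/inOmP: (hn) => /(_ i); rewrite hi => /(_ isT); lia.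
Qed.

Lemma Cat_r lam x y : Cat lam x y -> rpath (bx y) = kr lam.
Proof.
move=> /CatIm [hn H]; have h0 := inOm0 K (bm y); have h01 : leqd (dzero k) (kd lam) by dsolve.
by rewrite -(H h0 hn h01) xm_r /rpath (bool_irrelevance h0 (inOm0 K (bm y))).
Qed.

Lemma Cat_deg lam mu x x' y : Cat lam x y -> Cat mu x' y -> kd lam = kd mu -> lam = mu.
Proof.
move=> /CatIm [hn H] /CatIm [hn' H'] e.
have h0 := inOm0 K (bm y); have h01 : leqd (dzero k) (kd lam) by dsolve.
have h01' : leqd (dzero k) (kd mu) by dsolve.
rewrite -(H h0 hn h01) -(H' h0 hn' h01'); exact: xm_irr.
Qed.

Lemma CatC lam mu x z y : Cat mu x z -> Cat lam z y -> Cat (kcomp lam mu) x y.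
Proof.
move=> [hm ez [a1 a2]] [hl ey [b1 b2]].
have hlm : ks lam = kr mu by rewrite hl (Cat_r (And3 hm ez (conj a1 a2))).
have dlm := kd_comp hlm.
split.
- by rewrite ks_comp.
- rewrite ey ez /dJ dlm; dsolve.
- split.
  + move=> h0 h1 h01.
    have hn : inOm K (bm y) (kd lam) by rewrite ey; dsolve.
    have h0n : leqd (dzero k) (kd lam) by dsolve.
    have hnl : leqd (kd lam) (kd (kcomp lam mu)) by rewrite dlm; dsolve.
    rewrite (xm_comp (bx y) h0 hn h1 h0n hnl) b1.
    have hz0 := inOm0 K (bm z).
    have hzm : inOm K (bm z) (kd mu) by rewrite ez; dsolve.
    have hz01 : leqd (dzero k) (kd mu) by dsolve.
    have hy0 : inOm K (bm y) (addd (kd lam) (dzero k)) by rewrite ey ez; dsolve.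
    have hy1 : inOm K (bm y) (addd (kd lam) (kd mu)) by rewrite ey ez; dsolve.
    have hy01 : leqd (addd (kd lam) (dzero k)) (addd (kd lam) (kd mu)) by dsolve.
    have := b2 _ _ hz0 hzm hz01 hy0 hy1 hy01.
    rewrite a1 => e'; congr kcomp; apply: etrans _ e'; apply: xm_irr; rewrite ?dlm; dsolve.
  + move=> p q hp hq hpq hp' hq' hpq'.
    have hzp : inOm K (bm z) (addd (kd mu) p) by rewrite ez; dsolve.
    have hzq : inOm K (bm z) (addd (kd mu) q) by rewrite ez; dsolve.
    have hzpq : leqd (addd (kd mu) p) (addd (kd mu) q) by dsolve.
    have hyp : inOm K (bm y) (addd (kd lam) (addd (kd mu) p)) by rewrite ey ez; dsolve.
    have hyq : inOm K (bm y) (addd (kd lam) (addd (kd mu) q)) by rewrite ey ez; dsolve.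
    have hypq : leqd (addd (kd lam) (addd (kd mu) p)) (addd (kd lam) (addd (kd mu) q)) by dsolve.
    rewrite -(a2 p q hp hq hpq hzp hzq hzpq) -(b2 _ _ hzp hzq hzpq hyp hyq hypq).
    apply: xm_irr; rewrite dlm; dsolve.
Qed.

Lemma CatD lam mu x y : ks lam = kr mu -> Cat (kcomp lam mu) x y ->
  exists z, Cat mu x z /\ Cat lam z y.
Proof.
move=> hlm hc.
have [hl _ _] := hc.
have [z hz] := CatE (lam := mu) (x := x) ltac:(by rewrite -hl ks_comp).
have [y' hy'] := CatE (lam := lam) (x := z) ltac:(by rewrite (Cat_r hz)).
exists z; split => //.
by rewrite (CatF hc (CatC hz hy')).
Qed.

Lemma CatV v x y : Cat (kid v) x y <-> y = x /\ rpath (bx x) = v.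
Proof.
have self : forall x, Cat (kid (rpath (bx x))) x x.
  move=> x0; split; first by rewrite ks_id.
  - rewrite /dJ kd_id; dsolve.
  - split.
    + move=> h0 h1 h01.
      have hh : leqd (dzero k) (dzero k) by dsolve.
      rewrite (xm_irr (bx x0) _ _ _ h0 h0 hh) ?kd_id // xm_id /rpath.
      by rewrite (bool_irrelevance h0 (inOm0 K (bm x0))).
    + move=> p q hp hq hpq hp' hq' hpq'; apply: xm_irr; rewrite kd_id; dsolve.
split.
- move=> hc; have [hv _ _] := hc; rewrite ks_id in hv; subst v.
  by split => //; apply: CatF hc (self x).
- by move=> [-> <-].
Qed.

End Bidx.

Section RealStuff.
Local Open Scope R_scope.
Variable X : Type.

Definition indr (P : Prop) : R := if excluded_middle_informative P then 1 else 0.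
Lemma ind_iff P Q : (P <-> Q) -> indr P = indr Q.
Proof.
rewrite /indr => h; case: excluded_middle_informative => hp; case: excluded_middle_informative => hq //; exfalso; tauto.
Qed.
Lemma ind_T (P : Prop) : P -> indr P = 1.
Proof. by rewrite /indr; case: excluded_middle_informative. Qed.
Lemma ind_F (P : Prop) : ~ P -> indr P = 0.
Proof. by rewrite /indr; case: excluded_middle_informative. Qed.
Lemma ind_01 P : indr P = 0 \/ indr P = 1.
Proof. rewrite /indr; case: excluded_middle_informative; auto. Qed.

Lemma rsum_zero (f : X -> R) l : (forall b, List.In b l -> f b = 0) -> rsum f l = 0.
Proof.
elim: l => [//|a l IH] H /=; rewrite H /=; last by left.
rewrite IH; [ring | move=> b hb; apply: H; by right].
Qed.

Lemma rsum_one (f : X -> R) l a : List.NoDup l -> List.In a l ->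
  (forall b, List.In b l -> b <> a -> f b = 0) -> rsum f l = f a.
Proof.
elim: l => [//|c l IH] hnd /= hin H.
inversion hnd; subst.
case: hin => [e|hin].
- subst c; rewrite rsum_zero; first ring.
  move=> b hb; apply: H; first by right.
  by move=> e; subst.
- rewrite H; [|by left|by move=> e; subst].
  rewrite IH //; first ring.
  move=> b hb; apply: H; by right.
Qed.

Lemma rsum_ext (f g : X -> R) l : (forall b, List.In b l -> f b = g b) -> rsum f l = rsum g l.
Proof.
elim: l => [//|a l IH] H /=; rewrite H; last by left.
by rewrite IH // => b hb; apply: H; right.
Qed.

Lemma rsum_ge0 (f : X -> R) l : (forall b, List.In b l -> 0 <= f b) -> 0 <= rsum f l.
Proof.
elim: l => [|a l IH] H /=; first lra.
have := H a (or_introl erefl); have : 0 <= rsum f l by apply: IH => b hb; apply: H; right.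
lra.
Qed.

Lemma rsum_le (f g : X -> R) l : (forall b, List.In b l -> f b <= g b) -> rsum f l <= rsum g l.
Proof.
elim: l => [|a l IH] H /=; first lra.
have := H a (or_introl erefl); have : rsum f l <= rsum g l by apply: IH => b hb; apply: H; right.
lra.
Qed.

Lemma rsum_cons (f : X -> R) a l : rsum f (a :: l) = f a + rsum f l.
Proof. by []. Qed.

Lemma rsum_add (Y : Type) (f h : Y -> R) l : rsum (fun b => f b + h b) l = rsum f l + rsum h l.
Proof. elim: l => [|a l IH] /=; first ring. rewrite IH; ring. Qed.

Lemma rsum_swap (Y : Type) (g : X -> Y -> R) l1 l2 :
  rsum (fun a => rsum (fun b => g a b) l2) l1 = rsum (fun b => rsum (fun a => g a b) l1) l2.
Proof.
elim: l1 => [|a l1 IH].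
- transitivity 0; first by []. elim: l2 => [|b l2 IH2] /=; [by [] | rewrite -IH2; ring].
- rewrite rsum_cons IH -rsum_add; by [].
Qed.

Lemma rsum_ind (P : X -> Prop) l : List.NoDup l ->
  (forall a b, List.In a l -> List.In b l -> P a -> P b -> a = b) ->
  rsum (fun a => indr (P a)) l = indr (exists a, List.In a l /\ P a).
Proof.
case: (classic (exists a, List.In a l /\ P a)) => [[a [ha pa]]|hn] hnd H.
- rewrite (ind_T (ex_intro _ a (conj ha pa))) (rsum_one (a := a)) // ?ind_T //.
  move=> b hb hba; apply: ind_F => pb; apply: hba; exact: H.
- rewrite ind_F // rsum_zero // => b hb; apply: ind_F => pb; apply: hn; by exists b.
Qed.

Definition deceq (a b : X) : {a = b} + {a <> b} := excluded_middle_informative (a = b).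

Lemma eps_eq a b : (forall eps, 0 < eps -> Rabs (a - b) < eps) -> a = b.
Proof.
move=> H; apply: NNPP => hne.
have hp : 0 < Rabs (a - b) by apply: Rabs_pos_lt; lra.
have := H _ hp; lra.
Qed.

Lemma tsum_one (f : X -> R) z0 : (forall z, z <> z0 -> f z = 0) -> tsum f = f z0.
Proof.
move=> H.
have hs : HasSum f (f z0).
  move=> eps he; exists [:: z0] => F hF hinc.
  have hz : List.In z0 F by apply: hinc; left.
  rewrite (rsum_one hF hz); first by rewrite Rminus_diag Rabs_R0.
  move=> b _ hb; exact: H.
have := epsilon_spec (inhabits 0) (HasSum f) (ex_intro _ _ hs).
rewrite -/(tsum f) => ht; symmetry; apply: eps_eq => eps he.
have [F0 HF] := ht eps he.
have hz : List.In z0 (List.nodup deceq (z0 :: F0)) by apply/List.nodup_In; left.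
have := HF (List.nodup deceq (z0 :: F0)) (List.NoDup_nodup _ _).
rewrite (rsum_one (List.NoDup_nodup _ _) hz); last by move=> b _ hb; exact: H.
rewrite -Rabs_Ropp Ropp_minus_distr; apply.
move=> c hc; apply/List.nodup_In; by right.
Qed.

Lemma tsum_zero (f : X -> R) : (forall z, f z = 0) -> tsum f = 0.
Proof.
move=> H.
have hs : HasSum f 0.
  move=> eps he; exists [::] => F hF hinc.
  rewrite rsum_zero // Rminus_diag Rabs_R0 //.
have := epsilon_spec (inhabits 0) (HasSum f) (ex_intro _ _ hs).
rewrite -/(tsum f) => ht; symmetry; apply: eps_eq => eps he.
have [F0 HF] := ht eps he.
have := HF (List.nodup deceq F0) (List.NoDup_nodup _ _).
rewrite rsum_zero //.
- rewrite -Rabs_Ropp Ropp_minus_distr; apply.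
  move=> c hc; apply/List.nodup_In; by [].
Qed.

Lemma mul_ind (P Q : X -> Prop) : (forall z z', P z -> Q z -> P z' -> Q z' -> z = z') ->
  tsum (fun z => indr (P z) * indr (Q z)) = indr (exists z, P z /\ Q z).
Proof.
move=> H; case: (classic (exists z, P z /\ Q z)) => [[z0 [p0 q0]]|hn].
- rewrite (tsum_one (z0 := z0)) ?(ind_T p0) ?(ind_T q0) ?ind_T; [ring| by exists z0|].
  move=> z hz; case: (classic (P z)) => hp; last by rewrite ind_F //; ring.
  case: (classic (Q z)) => hq; last by rewrite (ind_F hq); ring.
  by case: hz; apply: H.
- rewrite ind_F // tsum_zero // => z.
  case: (classic (P z)) => hp; last by rewrite ind_F //; ring.
  case: (classic (Q z)) => hq; last by rewrite (ind_F hq); ring.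
  by case: hn; exists z.
Qed.

Definition indop (P : X -> X -> Prop) : op X := fun y x => indr (P y x).

Lemma meq_eq (A B : op X) : meq A B -> A = B.
Proof. move=> H; do 2 (apply: functional_extensionality => ?); exact: H. Qed.

Lemma mmul_ind (P Q : X -> X -> Prop) :
  (forall y x z z', P y z -> Q z x -> P y z' -> Q z' x -> z = z') ->
  mmul (indop P) (indop Q) = indop (fun y x => exists z, P y z /\ Q z x).
Proof.
move=> H; apply: meq_eq => y x; rewrite /mmul /indop.
apply: mul_ind => z z' *; exact: (H y x).
Qed.

Lemma indop_iff (P Q : X -> X -> Prop) : (forall y x, P y x <-> Q y x) -> indop P = indop Q.
Proof. move=> H; apply: meq_eq => y x; exact: ind_iff. Qed.

End RealStuff.

Section Main.
Variables (k : nat) (G : kgraph k) (K : pred 'I_k).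
Notation Mor := (kMor G).
Notation X := (bidx G K).
Notation T := (Tpoint K).

Lemma Tp_ind (lam : Mor) : T lam = indop (fun y x => Cat lam x y).
Proof. by []. Qed.

Lemma adj_ind (P : X -> X -> Prop) : adj (indop P) = indop (fun y x => P x y).
Proof. by []. Qed.

Lemma L_TTs (lam : Mor) : mmul (T lam) (adj (T lam)) =
  indop (fun y x => y = x /\ exists z, Cat lam z x).
Proof.
rewrite Tp_ind adj_ind mmul_ind.
- apply: indop_iff => y x; split.
  + move=> [z [h1 h2]]; split; [exact: CatF h1 h2 | by exists z].
  + move=> [-> [z h]]; by exists z.
- move=> y x z z' h1 _ h2 _; exact: CatI h1 h2.
Qed.

Lemma L_TsT (lam : Mor) : mmul (adj (T lam)) (T lam) =
  indop (fun y x => y = x /\ ks lam = rpath (bx x)).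
Proof.
rewrite Tp_ind adj_ind mmul_ind.
- apply: indop_iff => y x; split.
  + move=> [z [h1 h2]]; split; first exact: CatI h1 h2.
    by case: h2.
  + move=> [-> h]; have [z hz] := CatE h; by exists z.
- move=> y x z z' h1 _ h2 _; exact: CatF h1 h2.
Qed.

Lemma L_TT (lam mu : Mor) : ks lam = kr mu -> mmul (T lam) (T mu) = T (kcomp lam mu).
Proof.
move=> hlm; rewrite !Tp_ind mmul_ind.
- apply: indop_iff => y x; split.
  + move=> [z [h1 h2]]; exact: CatC h2 h1.
  + move=> h; have [z [h1 h2]] := CatD hlm h; by exists z.
- move=> y x z z' _ h1 _ h2; exact: CatF h1 h2.
Qed.

Lemma L_Tv (v : kObj G) : T (kid v) = indop (fun y x => y = x /\ rpath (bx x) = v).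
Proof. rewrite Tp_ind; apply: indop_iff => y x; exact: CatV. Qed.


Local Open Scope R_scope.

Lemma PI_eq (lam : Mor) : mmul (T lam) (mmul (adj (T lam)) (T lam)) = T lam.
Proof.
rewrite L_TsT [in LHS]Tp_ind mmul_ind.
- rewrite Tp_ind; apply: indop_iff => y x; split.
  + by move=> [z [h [e _]]]; subst z.
  + move=> h; exists x; split => //; split => //; by case: h.
- by move=> y x z z' _ [-> _] _ [-> _].
Qed.

Lemma sq_ind (lam : Mor) (F : seq X) (c : X -> R) y : List.NoDup F ->
  (let u := rsum (fun x => T lam y x * c x) F in u * u) =
  rsum (fun x => T lam y x * (c x * c x)) F.
Proof.
move=> hF /=; rewrite Tp_ind /indop.
case: (classic (exists x0, List.In x0 F /\ Cat lam x0 y)) => [[x0 [hx0 hc]]|hn].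
- rewrite (rsum_one hF hx0) ?(rsum_one hF hx0) ?ind_T //; first ring.
  + move=> b _ hb; rewrite ind_F; first ring. move=> hb'; apply: hb; exact: CatI hb' hc.
  + move=> b _ hb; rewrite ind_F; first ring. move=> hb'; apply: hb; exact: CatI hb' hc.
- rewrite !rsum_zero; first ring.
  + move=> b hb; rewrite ind_F; first ring. move=> hb'; apply: hn; by exists b.
  + move=> b hb; rewrite ind_F; first ring. move=> hb'; apply: hn; by exists b.
Qed.

Lemma Bnd (lam : Mor) : Defs.bounded (T lam).
Proof.
exists 1 => F G' c hF hG.
rewrite (rsum_ext (g := fun y => rsum (fun x => T lam y x * (c x * c x)) F)); last first.
  move=> y _; exact: sq_ind.
rewrite rsum_swap Rmult_1_l; apply: rsum_le => x _.
rewrite Tp_ind /indop.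
case: (classic (exists y0, List.In y0 G' /\ Cat lam x y0)) => [[y0 [hy0 hc]]|hn].
- rewrite (rsum_one hG hy0) ?ind_T //; first lra.
  move=> b _ hb; rewrite ind_F; first ring. move=> hb'; apply: hb; exact: CatF hb' hc.
- rewrite rsum_zero; first nra.
  move=> b hb; rewrite ind_F; first ring. move=> hb'; apply: hn; by exists b.
Qed.

Lemma Tproj (v : kObj G) : is_projection (T (kid v)).
Proof.
rewrite L_Tv; split.
- move=> y x; rewrite /adj /indop; apply: ind_iff; split; by move=> [-> ->].
- rewrite mmul_ind.
  + move=> y x; apply: ind_iff; split.
    * by move=> [z [[-> _] [-> ->]]].
    * move=> [e h]; subst y; exists x; tauto.
  + by move=> y x z z' _ [-> _] _ [-> _].
Qed.

Lemma Torth (v w : kObj G) : v <> w -> meq (mmul (T (kid v)) (T (kid w))) (@mzero X).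
Proof.
move=> hvw; rewrite !L_Tv mmul_ind.
- move=> y x; rewrite /indop /mzero; apply: ind_F.
  move=> [z [[_ hz] [ezx hx]]]; apply: hvw; subst z; by rewrite -hz -hx.
- by move=> y x z z' _ [-> _] _ [-> _].
Qed.


Lemma ind_sub (P Q : Prop) : (Q -> P) -> indr P - indr Q = indr (P /\ ~ Q).
Proof.
move=> h; case: (classic Q) => hq.
- rewrite (ind_T (h hq)) (ind_T hq) ind_F; [ring | tauto].
- case: (classic P) => hp.
  + rewrite (ind_T hp) (ind_F hq) ind_T; [ring | tauto].
  + rewrite (ind_F hp) (ind_F hq) ind_F; [ring | tauto].
Qed.

Lemma eF_TTs : (fun lam : Mor => mmul (T lam) (adj (T lam))) =
  (fun lam => indop (fun y x => y = x /\ exists z, Cat lam z x)).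
Proof. apply: functional_extensionality => lam; exact: L_TTs. Qed.

Lemma T4 (v : kObj G) (n : deg k) (l : seq Mor) : List.NoDup l ->
  (forall lam, List.In lam l <-> (kr lam = v /\ kd lam = n)) ->
  Defs.positive (msub (T (kid v)) (msum (fun lam => mmul (T lam) (adj (T lam))) l)).
Proof.
move=> hl hs.
rewrite eF_TTs L_Tv.
have eA : msub (@indop X (fun y x => y = x /\ rpath (bx x) = v))
   (msum (fun lam => @indop X (fun y x => y = x /\ exists z, Cat lam z x)) l) =
   @indop X (fun y x => (y = x /\ rpath (bx x) = v) /\
      ~ (exists lam, List.In lam l /\ (y = x /\ exists z, Cat lam z x))).
  apply: meq_eq => y x; rewrite /msub /msum /indop rsum_ind //.
  - apply: ind_sub => [[lam [hin [e [z hz]]]]]; split => //.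
    have [hr _] := (hs lam).1 hin; by rewrite (Cat_r hz).
  - move=> a b ha hb [_ [z hz]] [_ [z' hz']].
    apply: Cat_deg hz hz' _; by rewrite ((hs a).1 ha).2 ((hs b).1 hb).2.
rewrite eA; split.
- move=> y x; rewrite /adj /indop; apply: ind_iff; split; by move=> [[e h] hn]; subst.
- move=> F c hF; rewrite /indop; apply: rsum_ge0 => y hy.
  rewrite (rsum_one hF hy).
  + case: (ind_01 ((y = y /\ rpath (bx y) = v) /\
      ~ (exists lam, List.In lam l /\ (y = y /\ exists z, Cat lam z y)))) => ->; nra.
  + move=> b _ hb; rewrite ind_F; first ring. by move=> [[e _] _]; apply: hb.
Qed.

Lemma L_TsT2 (mu nu : Mor) : mmul (adj (T mu)) (T nu) =
  indop (fun y x => exists z, Cat mu y z /\ Cat nu x z).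
Proof.
rewrite !Tp_ind adj_ind mmul_ind //.
move=> y x z z' h1 _ h2 _; exact: CatF h1 h2.
Qed.

Lemma L_TTs2 (a b : Mor) : mmul (T a) (adj (T b)) =
  indop (fun y x => exists w, Cat a w y /\ Cat b w x).
Proof.
rewrite !Tp_ind adj_ind mmul_ind //.
move=> y x z z' h1 _ h2 _; exact: CatI h1 h2.
Qed.

Lemma Lmin_deg1 (mu nu a b : Mor) : Lmin mu nu a b ->
  kd a = subd (joind (kd mu) (kd nu)) (kd mu).
Proof. move=> [h1 h2 h3 h4]; rewrite kd_comp // in h4; dsolve. Qed.

Lemma Lmin_deg2 (mu nu a b : Mor) : Lmin mu nu a b ->
  kd b = subd (joind (kd mu) (kd nu)) (kd nu).
Proof. move=> [h1 h2 h3 h4]; rewrite h3 kd_comp // in h4; dsolve. Qed.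

Lemma T5 (mu nu : Mor) (l : seq (Mor * Mor)) : List.NoDup l ->
  (forall pr, List.In pr l <-> Lmin mu nu pr.1 pr.2) ->
  meq (mmul (adj (T mu)) (T nu)) (msum (fun pr => mmul (T pr.1) (adj (T pr.2))) l).
Proof.
move=> hl hs.
have eF : (fun pr : Mor * Mor => mmul (T pr.1) (adj (T pr.2))) =
  (fun pr => indop (fun y x => exists w, Cat pr.1 w y /\ Cat pr.2 w x)).
  apply: functional_extensionality => pr; exact: L_TTs2.
rewrite eF L_TsT2 => y x; rewrite /msum /indop rsum_ind //.
- apply: ind_iff; split.
  + move=> [z [hy hx]].
    have [hm Hm] := CatIm hy.
    have [hn Hn] := CatIm hx.
    have ht : inOm K (bm z) (joind (kd mu) (kd nu)) by dsolve.
    have h0 := inOm0 K (bm z).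
    have hmt : leqd (kd mu) (joind (kd mu) (kd nu)) by dsolve.
    have hnt : leqd (kd nu) (joind (kd mu) (kd nu)) by dsolve.
    have h0m : leqd (dzero k) (kd mu) by dsolve.
    have h0n : leqd (dzero k) (kd nu) by dsolve.
    have h0t : leqd (dzero k) (joind (kd mu) (kd nu)) by dsolve.
    set eta := @xm _ _ _ _ (bx z) _ _ hm ht hmt.
    set zeta := @xm _ _ _ _ (bx z) _ _ hn ht hnt.
    have e1 : @xm _ _ _ _ (bx z) _ _ h0 ht h0t = kcomp mu eta.
      by rewrite (xm_comp (bx z) h0 hm ht h0m hmt) Hm.
    have e2 : @xm _ _ _ _ (bx z) _ _ h0 ht h0t = kcomp nu zeta.
      by rewrite (xm_comp (bx z) h0 hn ht h0n hnt) Hn.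
    have hmeta : ks mu = kr eta by rewrite -(Hm h0 hm h0m) xm_s xm_r.
    have hnzeta : ks nu = kr zeta by rewrite -(Hn h0 hn h0n) xm_s xm_r.
    have kdme : kd (kcomp mu eta) = joind (kd mu) (kd nu) by rewrite -e1 xm_deg; dsolve.
    have ec : kcomp mu eta = kcomp nu zeta by rewrite -e1 -e2.
    have hL : Lmin mu nu eta zeta by split.
    exists (eta, zeta); split; first by apply/hs.
    have [w hw] := @CatPre _ _ K (kcomp mu eta) z ltac:(by rewrite kdme)
      ltac:(move=> h0' h1' h01'; apply: etrans _ e1; apply: xm_irr; [done | exact: kdme]).
    have [y' [hw1 hw2]] := CatD hmeta hw.
    have ey := CatI hw2 hy; subst y'.
    rewrite ec in hw.
    have [x' [hx1 hx2]] := CatD hnzeta hw.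
    have ex := CatI hx2 hx; subst x'.
    by exists w.
  + move=> [[eta zeta] [hin [w [h1 h2]]]]; simpl in *.
    have [hme hnz hc hd] := (hs _).1 hin; simpl in *.
    have hr : ks mu = rpath (bx y) by rewrite hme (Cat_r h1).
    have [z hz] := CatE hr.
    have hc1 := CatC h1 hz; rewrite hc in hc1.
    have [x' [hx1 hx2]] := CatD hnz hc1.
    have ex := CatF hx1 h2; subst x'.
    by exists z.
- move=> [a b] [a' b'] ha hb [w [h1 h2]] [w' [h1' h2']]; simpl in *.
  have La := (hs _).1 ha; have Lb := (hs _).1 hb; simpl in *.
  have ea : a = a' by apply: Cat_deg h1 h1' _; rewrite (Lmin_deg1 La) (Lmin_deg1 Lb).
  have eb : b = b' by apply: Cat_deg h2 h2' _; rewrite (Lmin_deg2 La) (Lmin_deg2 Lb).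
  by rewrite ea eb.
Qed.

Lemma CK (v : kObj G) (i : 'I_k) (l : seq Mor) : K i -> List.NoDup l ->
  (forall e, List.In e l <-> (kr e = v /\ kd e = unit_deg i)) ->
  meq (msum (fun e => mmul (T e) (adj (T e))) l) (T (kid v)).
Proof.
move=> Ki hl hs.
rewrite eF_TTs L_Tv => y x; rewrite /msum /indop rsum_ind //.
- apply: ind_iff; split.
  + move=> [e [hin [eyx [z hz]]]]; split => //.
    have [hr _] := (hs e).1 hin; by rewrite (Cat_r hz).
  + move=> [eyx hr]; subst y.
    have hi : inOm K (bm x) (unit_deg i).
      apply/inOmP => j hj; rewrite /unit_deg ffunE; case: eqP => [ej|] //.
      by subst j; rewrite Ki in hj.
    have h0 := inOm0 K (bm x).
    have h0i : leqd (dzero k) (unit_deg i) by dsolve.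
    set e := @xm _ _ _ _ (bx x) _ _ h0 hi h0i.
    have kde : kd e = unit_deg i.
      rewrite /e xm_deg; apply/degP => j; rewrite /unit_deg /dzero !ffunE; lia.
    exists e; split.
    * apply/hs; split => //; rewrite /e xm_r -hr /rpath; exact: xo_irr.
    * split => //.
      apply: (@CatPre _ _ K e x); first by rewrite kde.
      move=> h0' h1' h01'; rewrite /e; exact: xm_irr.
- move=> a b ha hb [_ [z hz]] [_ [z' hz']].
  apply: Cat_deg hz hz' _; by rewrite ((hs a).1 ha).2 ((hs b).1 hb).2.
Qed.

End Main.

Theorem proposition3p5 (k : nat) (G : kgraph k) (K : pred 'I_k) :
  kfinite G -> no_sources G ->
  (exists i : 'I_k, K i) -> (exists i : 'I_k, ~~ K i) ->
  TCK_family (@Tpoint k G K) /\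
  (forall (v : kObj G) (i : 'I_k) (l : seq (kMor G)), K i -> List.NoDup l ->
     (forall e, List.In e l <-> (kr e = v /\ kd e = unit_deg i)) ->
     meq (msum (fun e => mmul (Tpoint K e) (adj (Tpoint K e))) l) (Tpoint K (kid v))).
Proof.
move=> _ _ _ _; split; last exact: CK.
split.
- move=> lam; split; first exact: Bnd.
  by rewrite PI_eq => ? ?.
- split; [exact: Tproj | exact: Torth].
- by move=> lam mu h; rewrite L_TT // => ? ?.
- move=> lam; rewrite L_TsT L_Tv => y x; apply: ind_iff; split; by move=> [-> ->].
- split; [exact: T4 | exact: T5].
Qed.
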